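(* For every integer $m\ge1$: \[\sum_{q=1}^{m-1}\frac{\binom{m}{q}\binom{m-1}{q+2}}{\binom{2m}{2q}} = \frac{1}{6}m^2 -\frac{13}{6}m -3 +\frac{5}{2}\,4^m\frac{(m!)^2}{(2m)!},\] \[\sum_{q=1}^{m-1}\frac{\binom{m}{q}\binom{m-1}{q+1}}{\binom{2m}{2q}} = m +2 -\frac{3}{2}\,4^m\frac{(m!)^2}{(2m)!},\] \[\sum_{q=1}^{m-1}\frac{\binom{m}{q}\binom{m-1}{q}}{\binom{2m}{2q}} = -1 +\frac{1}{2}\,4^m\frac{(m!)^2}{(2m)!}.\]
   Context: Binomial coefficients $\binom{n}{k}$ are zero when $k>n$ or $k<0$. *)

(* Defs.v *)
From mathcomp Require Import all_boot all_order all_algebra.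
Set Implicit Arguments. Unset Strict Implicit. Unset Printing Implicit Defensive.

(* Main.v *)
Require Import Defs.
From mathcomp Require Import all_boot all_order all_algebra.
From mathcomp Require Import ring lra.
Import GRing.Theory Num.Theory.
Local Open Scope ring_scope.

Fixpoint g (k : nat) : rat :=
  if k is k'.+1 then g k' * (2 * k'%:R + 1) / (2 * k'%:R + 2) else 1.

Definition M n (P : rat -> rat) := \sum_(0 <= q < n.+1) g q * g (n - q) * P q%:R.

Lemma nat_ge0 (k : nat) : (0 : rat) <= k%:R. Proof. exact: ler0n. Qed.

Lemma gSq k : g k.+1 * (k%:R + 1) = g k * (k%:R + 2^-1).
Proof.
rewrite /=. have h := nat_ge0 k.
have h2 : 2 * k%:R + 2 != 0 :> rat by apply/eqP; lra.
field. by rewrite h2.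
Qed.

Lemma Mext n P Q : (forall x, P x = Q x) -> M n P = M n Q.
Proof. by move=> h; apply: eq_bigr => q _; rewrite h. Qed.

Lemma Mlin n a b P Q : M n (fun x => a * P x + b * Q x) = a * M n P + b * M n Q.
Proof.
rewrite /M !mulr_sumr -big_split /=; apply: eq_bigr => q _; ring.
Qed.

Lemma MK n P : M n.+1 (fun x => x * P x) = M n (fun x => (x + 2^-1) * P (x + 1)).
Proof.
rewrite /M big_nat_recl // mul0r mulr0 add0r; apply: eq_bigr => q _.
rewrite subSS -natr1.
set u := g q.+1.
transitivity (u * (q%:R+1) * g (n-q) * P (q%:R+1)); first ring.
rewrite /u gSq; ring.
Qed.

Lemma Msym n P : M n P = M n (fun x => P (n%:R - x)).
Proof.
rewrite /M big_nat_rev /=; apply: eq_big_nat => q /andP [_ hq].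
rewrite add0n subSS subKn // natrB //; ring.
Qed.

Lemma M1 n : M n (fun _ => 1) = 1.
Proof.
elim: n => [|n IH]; first by rewrite /M big_nat1.
have B : forall k, 2 * M k (fun x => x) = k%:R * M k (fun _ => 1).
  move=> k; rewrite mulr2n mulrDl mul1r {2}Msym.
  have -> : M k (fun x => k%:R - x) = M k (fun x => k%:R * 1 + (-1) * x).
    by apply: Mext => x; ring.
  rewrite Mlin; ring.
have K : M n.+1 (fun x => x) = M n (fun x => x) + 2^-1 * M n (fun _ => 1).
  rewrite (@Mext n.+1 _ (fun x => x * 1)); last by move=> x; ring.
  rewrite MK (@Mext n _ (fun x => 1 * x + 2^-1 * 1)); last by move=> x; ring.
  by rewrite Mlin mul1r.
have E := B n.+1; rewrite K mulrDr B IH -[n.+1%:R]natr1 in E.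
have h := nat_ge0 n. apply: (mulfI (x := n%:R + 1)); first by apply/eqP; lra.
by rewrite -E; field.
Qed.

Definition Mf (n : nat) (a b c d : rat) :=
  a + b * n%:R / 2 + c * (3 * n%:R ^+ 2 + n%:R) / 8 + d * (5 * n%:R ^+ 3 + 3 * n%:R ^+ 2) / 16.

Lemma Mpoly n a b c d :
  M n (fun x => a + b * x + c * x ^+ 2 + d * x ^+ 3) = Mf n a b c d.
Proof.
elim: n a b c d => [|n IH] a b c d.
  by rewrite /M big_nat1 /Mf /=; field.
rewrite (@Mext n.+1 _ (fun x => a * 1 + 1 * (x * (b + c * x + d * x ^+ 2)))); last by move=> x; ring.
rewrite Mlin M1 MK.
rewrite (@Mext n _ (fun x => 2^-1 * (b + c + d) + ((b + c + d) + 2^-1 * (c + 2 * d)) * x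
     + ((c + 2 * d) + 2^-1 * d) * x ^+ 2 + d * x ^+ 3)); last by move=> x; ring.
by rewrite IH /Mf -[n.+1%:R]natr1; field.
Qed.

Definition N n i (P : rat -> rat) := \sum_(0 <= q < n.+1) g (q + i) * g (n - q) * P q%:R.

Lemma Next n i P Q : (forall x, P x = Q x) -> N n i P = N n i Q.
Proof. by move=> h; apply: eq_bigr => q _; rewrite h. Qed.

Lemma N0 n Q : N n 0 (fun x => Q (n%:R - x)) = M n Q.
Proof. by rewrite [RHS]Msym; apply: eq_bigr => q _; rewrite addn0. Qed.

Lemma Nshift n i P : N n i.+1 P = N n.+1 i (fun x => P (x - 1)) - g i * g n.+1 * P (-1).
Proof.
rewrite [in RHS]/N big_nat_recl // add0n subn0 sub0r addrAC subrr add0r.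
apply: eq_bigr => q _; rewrite addSnnS subSS -natr1 addrK //.
Qed.

Lemma N1 n Q : N n 1 (fun x => Q (n%:R - x)) = M n.+1 Q - g n.+1 * Q (n%:R + 1).
Proof.
rewrite Nshift (@Next _ _ _ (fun x => Q (n.+1%:R - x))); last first.
  by move=> x; rewrite -natr1; congr Q; ring.
rewrite N0 /= mul1r; congr (_ - _ * Q _); ring.
Qed.

Lemma N2 n Q : N n 2 (fun x => Q (n%:R - x)) =
  M n.+2 Q - g n.+2 * Q (n%:R + 2) - g 1 * g n.+1 * Q (n%:R + 1).
Proof.
rewrite Nshift (@Next _ _ _ (fun x => Q (n.+1%:R - x))); last first.
  by move=> x; rewrite -natr1; congr Q; ring.
rewrite N1 -natr1; congr (_ - _ * Q _ - _ * Q _); ring.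
Qed.

Lemma gS k : g k.+1 = g k * (2 * k%:R + 1) / (2 * k%:R + 2).
Proof. by []. Qed.

Lemma factr_neq0 k : (k`!)%:R != 0 :> rat.
Proof. by rewrite pnatr_eq0 -lt0n fact_gt0. Qed.

Lemma gfact k : g k * (4 ^+ k * (k`!)%:R ^+ 2) = ((2 * k)`!)%:R.
Proof.
elim: k => [|k IH]; first by rewrite /= expr0 mul1r expr2 mul1r.
have -> : (2 * k.+1 = (2 * k).+2)%N by rewrite mulnS.
rewrite gS !factS !natrM -IH.
have e1 : ((2 * k).+2)%:R = 2 * k%:R + 2 :> rat by rewrite -!natr1 natrM; ring.
have e2 : ((2 * k).+1)%:R = 2 * k%:R + 1 :> rat by rewrite -!natr1 natrM; ring.
have e3 : (k.+1)%:R = k%:R + 1 :> rat by rewrite -!natr1.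
rewrite e1 e2 e3 exprS.
set G := g k. have h := nat_ge0 k.
field. apply/eqP; lra.
Qed.

Lemma binr n k : (k <= n)%N ->
  ('C(n, k))%:R = (n`!)%:R / ((k`!)%:R * ((n - k)`!)%:R) :> rat.
Proof.
move=> hk; rewrite -(bin_fact hk) !natrM; field.
by rewrite !factr_neq0.
Qed.

Lemma sqbin m q : (q <= m)%N ->
  ('C(m, q))%:R ^+ 2 / ('C(2 * m, 2 * q))%:R =
  (4 ^+ m * (m`!)%:R ^+ 2 / ((2 * m)`!)%:R) * g q * g (m - q) :> rat.
Proof.
move=> hq.
have h2 : (2 * q <= 2 * m)%N by rewrite leq_mul2l hq orbT.
rewrite (@binr _ _ hq) (@binr _ _ h2) -mulnBr.
have G1 := gfact q; have G2 := gfact (m - q).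
have e4 : (4 : rat) ^+ m = 4 ^+ q * 4 ^+ (m - q) by rewrite -exprD subnKC.
rewrite e4.
have gq : g q = ((2 * q)`!)%:R / (4 ^+ q * (q`!)%:R ^+ 2).
  rewrite -G1; field. by rewrite expf_neq0 ?factr_neq0 // expf_neq0.
have gmq : g (m - q) = ((2 * (m - q))`!)%:R / (4 ^+ (m - q) * ((m - q)`!)%:R ^+ 2).
  rewrite -G2; field. by rewrite expf_neq0 ?factr_neq0 // expf_neq0.
rewrite gq gmq; field.
by rewrite !factr_neq0 !expf_neq0.
Qed.

Lemma bd m k : m%:R * ('C(m.-1, k))%:R = (m%:R - k%:R) * ('C(m, k))%:R :> rat.
Proof.
case: (leqP k m) => hk.
  by rewrite -natrB // -!natrM mul_bin_down.
rewrite !bin_small //; first by rewrite !mulr0.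
by case: m hk => // m /= /ltnW.
Qed.

Lemma bl m k : (k%:R + 1) * ('C(m, k.+1))%:R = (m%:R - k%:R) * ('C(m, k))%:R :> rat.
Proof.
case: (leqP k m) => hk.
  by rewrite -natrB // natr1 -!natrM mul_bin_left.
rewrite !bin_small //; first by rewrite !mulr0.
exact: ltnW.
Qed.

Lemma Ncomb n a0 a1 a2 P :
  \sum_(0 <= q < n.+1) (a0 * g (q + 0) + a1 * g (q + 1) + a2 * g (q + 2)) * g (n - q) * P q%:R
  = a0 * N n 0 P + a1 * N n 1 P + a2 * N n 2 P.
Proof.
rewrite /N !mulr_sumr -!big_split; apply: eq_bigr => q _.
set u := g (q + 0); set v := g (q + 1); set w := g (q + 2); set z := g (n - q).
rewrite /=. ring.
Qed.

Lemma sum_in (F : nat -> rat) m : (0 < m)%N ->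
  \sum_(1 <= q < m) F q = \sum_(0 <= q < m.+1) F q - F 0%N - F m.
Proof.
move=> hm; rewrite big_nat_recr // (big_ltn hm) /=; ring.
Qed.

Lemma Mpoly' n P a b c d : (forall x, P x = a + b * x + c * x ^+ 2 + d * x ^+ 3) ->
  M n P = Mf n a b c d.
Proof. by move=> h; rewrite (@Mext n _ _ h) Mpoly. Qed.

Definition cc m : rat := 4 ^+ m * (m`!)%:R ^+ 2 / ((2 * m)`!)%:R.

Lemma Dneq0 m q : (q <= m)%N -> ('C(2 * m, 2 * q))%:R != 0 :> rat.
Proof. by move=> hq; rewrite pnatr_eq0 -lt0n bin_gt0 leq_mul2l hq orbT. Qed.

Lemma t1 m q : (q < m)%N ->
  ('C(m, q) * 'C(m.-1, q + 1))%:R / ('C(2 * m, 2 * q))%:R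
  = cc m / m%:R * ((2 * g (q + 0) + (-2) * g (q + 1) + 0 * g (q + 2)) * g (m - q) *
     (fun x => (fun y => y * (y - 1)) (m%:R - x)) q%:R).
Proof.
move=> hq; have hq' := ltnW hq.
have hm : m%:R != 0 :> rat by rewrite pnatr_eq0 -lt0n (leq_ltn_trans _ hq).
have hx := nat_ge0 q.
have hx1 : q%:R + 1 != 0 :> rat by apply/eqP; lra.
have E1 := bd m (q + 1); have E2 := bl m q.
rewrite addn1 -[q.+1%:R]natr1 in E1.
have B : ('C(m.-1, q + 1))%:R = ('C(m,q))%:R * ((m%:R - q%:R) * (m%:R - q%:R - 1)) / (m%:R * (q%:R + 1)) :> rat.
  apply: (mulfI hm); rewrite addn1 E1.
  have -> : ('C(m, q.+1))%:R = (m%:R - q%:R) * ('C(m,q))%:R / (q%:R + 1) :> rat.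
    by rewrite -E2; field.
  by field; rewrite hx1 hm.
rewrite natrM B.
have S := @sqbin _ _ hq'.
have hD := @Dneq0 _ _ hq'.
set C0 := ('C(m, q))%:R in S *.
set D := ('C(2 * m, 2 * q))%:R in S hD *.
have -> : C0 * (C0 * ((m%:R - q%:R) * (m%:R - q%:R - 1)) / (m%:R * (q%:R + 1))) / D
   = (C0 ^+ 2 / D) * (((m%:R - q%:R) * (m%:R - q%:R - 1)) / (m%:R * (q%:R + 1))).
  by field; rewrite ?hD ?hm ?hx1.
rewrite S /cc addn0 addn1 addn2 !gS -[q.+1%:R]natr1.
set G := g q; set H := g (m - q); set K := 4 ^+ m * _ / _.
rewrite /=.
field; rewrite ?hm ?hx1 /=; repeat (apply/andP; split); try done; apply/eqP; lra.
Qed.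

Lemma t0 m q : (q < m)%N ->
  ('C(m, q) * 'C(m.-1, q))%:R / ('C(2 * m, 2 * q))%:R
  = cc m / m%:R * ((1 * g (q + 0) + 0 * g (q + 1) + 0 * g (q + 2)) * g (m - q) *
     (fun x => (fun y => y) (m%:R - x)) q%:R).
Proof.
move=> hq; have hq' := ltnW hq.
have hm : m%:R != 0 :> rat by rewrite pnatr_eq0 -lt0n (leq_ltn_trans _ hq).
have hx := nat_ge0 q.
have hx1 : q%:R + 1 != 0 :> rat by apply/eqP; lra.
have E1 := bd m q.
have B : ('C(m.-1, q))%:R = ('C(m,q))%:R * (m%:R - q%:R) / m%:R :> rat.
  apply: (mulfI hm); rewrite E1.
  by field; rewrite hm.
rewrite natrM B.
have S := @sqbin _ _ hq'.
have hD := @Dneq0 _ _ hq'.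
set C0 := ('C(m, q))%:R in S *.
set D := ('C(2 * m, 2 * q))%:R in S hD *.
have -> : C0 * (C0 * (m%:R - q%:R) / m%:R) / D
   = (C0 ^+ 2 / D) * ((m%:R - q%:R) / m%:R).
  by field; rewrite ?hD ?hm ?hx1.
rewrite S /cc addn0 addn1 addn2 !gS -[q.+1%:R]natr1.
set G := g q; set H := g (m - q); set K := 4 ^+ m * _ / _.
rewrite /=.
field; rewrite ?hm ?hx1 /=; repeat (apply/andP; split); try done; apply/eqP; lra.
Qed.

Lemma t2 m q : (q < m)%N ->
  ('C(m, q) * 'C(m.-1, q + 2))%:R / ('C(2 * m, 2 * q))%:R
  = cc m / m%:R * ((4/3 * g (q + 0) + (-8/3) * g (q + 1) + 4/3 * g (q + 2)) * g (m - q) *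
     (fun x => (fun y => y * (y - 1) * (y - 2)) (m%:R - x)) q%:R).
Proof.
move=> hq; have hq' := ltnW hq.
have hm : m%:R != 0 :> rat by rewrite pnatr_eq0 -lt0n (leq_ltn_trans _ hq).
have hx := nat_ge0 q.
have hx1 : q%:R + 1 != 0 :> rat by apply/eqP; lra.
have hx2 : q%:R + 2 != 0 :> rat by apply/eqP; lra.
have E1 := bd m (q + 2); have E2 := bl m q; have E3 := bl m q.+1.
rewrite addn2 -[q.+2%:R]natr1 -[q.+1%:R]natr1 in E1.
rewrite -[q.+1%:R]natr1 in E3.
have B : ('C(m.-1, q + 2))%:R = ('C(m,q))%:R * ((m%:R - q%:R) * (m%:R - q%:R - 1) * (m%:R - q%:R - 2))
     / (m%:R * (q%:R + 1) * (q%:R + 2)) :> rat.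
  apply: (mulfI hm); rewrite addn2 E1.
  have -> : ('C(m, q.+2))%:R = (m%:R - (q%:R + 1)) * ('C(m,q.+1))%:R / (q%:R + 2) :> rat.
    rewrite -E3; field; rewrite ?hx2 //; apply/eqP; lra.
  have -> : ('C(m, q.+1))%:R = (m%:R - q%:R) * ('C(m,q))%:R / (q%:R + 1) :> rat.
    by rewrite -E2; field.
  by field; rewrite ?hx1 ?hm ?hx2.
rewrite natrM B.
have S := @sqbin _ _ hq'.
have hD := @Dneq0 _ _ hq'.
set C0 := ('C(m, q))%:R in S *.
set D := ('C(2 * m, 2 * q))%:R in S hD *.
have -> : C0 * (C0 * ((m%:R - q%:R) * (m%:R - q%:R - 1) * (m%:R - q%:R - 2)) / (m%:R * (q%:R + 1) * (q%:R + 2))) / D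
   = (C0 ^+ 2 / D) * (((m%:R - q%:R) * (m%:R - q%:R - 1) * (m%:R - q%:R - 2)) / (m%:R * (q%:R + 1) * (q%:R + 2))).
  by field; rewrite ?hD ?hm ?hx1 ?hx2.
rewrite S /cc addn0 addn1 addn2 !gS -[q.+1%:R]natr1.
set G := g q; set H := g (m - q); set K := 4 ^+ m * _ / _.
rewrite /=.
field; rewrite ?hm ?hx1 ?hx2 /=; repeat (apply/andP; split); try done; apply/eqP; lra.
Qed.

Lemma main_gen m a0 a1 a2 (Q : rat -> rat) (T : nat -> rat) : (0 < m)%N ->
  (forall q, (q < m)%N -> T q = cc m / m%:R * ((a0 * g (q + 0) + a1 * g (q + 1) + a2 * g (q + 2)) * g (m - q) *
     (fun x => Q (m%:R - x)) q%:R)) -> Q 0 = 0 ->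
  \sum_(1 <= q < m) T q = cc m / m%:R * (a0 * M m Q + a1 * (M m.+1 Q - g m.+1 * Q (m%:R + 1))
     + a2 * (M m.+2 Q - g m.+2 * Q (m%:R + 2) - g 1 * g m.+1 * Q (m%:R + 1))
     - (a0 * g 0 + a1 * g 1 + a2 * g 2) * g m * Q m%:R).
Proof.
move=> hm hT hQ.
rewrite (@eq_big_nat _ _ _ 1 m _ (fun q => cc m / m%:R * ((a0 * g (q + 0) + a1 * g (q + 1) + a2 * g (q + 2)) * g (m - q) *
     (fun x => Q (m%:R - x)) q%:R))); last first.
  by move=> q /andP [_ h]; apply: hT.
rewrite -mulr_sumr (@sum_in _ _ hm) (Ncomb m a0 a1 a2 (fun x => Q (m%:R - x))) N0 N1 N2 /= subnn subrr hQ subn0 subr0 ?add0n.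
by rewrite !mulr0 subr0.
Qed.

Lemma gneq0 m : g m != 0.
Proof.
apply/eqP => h; have := gfact m; rewrite h mul0r => /esym /eqP.
by rewrite (negbTE (factr_neq0 _)).
Qed.

Lemma ccg m : cc m * g m = 1.
Proof.
have G := gfact m. rewrite /cc -G. field.
by rewrite factr_neq0 expf_neq0 // gneq0.
Qed.

Ltac closer hm gn := rewrite ?hm ?gn /=; repeat (apply/andP; split); try done; apply/eqP; lra.

Lemma part2 m : (0 < m)%N ->
  \sum_(1 <= q < m) (('C(m, q) * 'C(m.-1, q + 2))%:R / ('C(2 * m, 2 * q))%:R : rat)
  = 6^-1 * (m%:R) ^+ 2 - 13%:R / 6%:R * m%:R - 3%:R + 5%:R / 2%:R * cc m.
Proof.
move=> hm0.
rewrite (@main_gen m (4/3) (-8/3) (4/3) (fun y => y * (y - 1) * (y - 2))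
   (fun q => ('C(m, q) * 'C(m.-1, q + 2))%:R / ('C(2 * m, 2 * q))%:R) hm0 (fun q hq => @t2 m q hq));
  last by rewrite !mul0r.
have MQ : forall n, M n (fun y => y * (y - 1) * (y - 2)) = Mf n 0 2 (-3) 1.
  by move=> n; apply: Mpoly' => x; ring.
rewrite !MQ /Mf !gS /= -[m.+2%:R]natr1 -[m.+1%:R]natr1.
have hg := ccg m; have gn := gneq0 m.
have hm : m%:R != 0 :> rat by rewrite pnatr_eq0 -lt0n.
have hx := nat_ge0 m.
set G := g m in hg gn *; set C := cc m in hg *.
have EC : C = G^-1 by apply: (mulIf gn); rewrite hg mulVf.
rewrite EC; field; closer hm gn.
Qed.

Lemma part1 m : (0 < m)%N ->
  \sum_(1 <= q < m) (('C(m, q) * 'C(m.-1, q + 1))%:R / ('C(2 * m, 2 * q))%:R : rat)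
  = m%:R + 2%:R - 3%:R / 2%:R * cc m.
Proof.
move=> hm0.
rewrite (@main_gen m 2 (-2) 0 (fun y => y * (y - 1))
   (fun q => ('C(m, q) * 'C(m.-1, q + 1))%:R / ('C(2 * m, 2 * q))%:R) hm0 (fun q hq => @t1 m q hq));
  last by rewrite !mul0r.
have MQ : forall n, M n (fun y => y * (y - 1)) = Mf n 0 (-1) 1 0.
  by move=> n; apply: Mpoly' => x; ring.
rewrite !MQ /Mf !gS /= -[m.+2%:R]natr1 -[m.+1%:R]natr1.
have hg := ccg m; have gn := gneq0 m.
have hm : m%:R != 0 :> rat by rewrite pnatr_eq0 -lt0n.
have hx := nat_ge0 m.
set G := g m in hg gn *; set C := cc m in hg *.
have EC : C = G^-1 by apply: (mulIf gn); rewrite hg mulVf.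
rewrite EC; field; closer hm gn.
Qed.

Lemma part0 m : (0 < m)%N ->
  \sum_(1 <= q < m) (('C(m, q) * 'C(m.-1, q))%:R / ('C(2 * m, 2 * q))%:R : rat)
  = - 1 + 2^-1 * cc m.
Proof.
move=> hm0.
rewrite (@main_gen m 1 0 0 (fun y => y)
   (fun q => ('C(m, q) * 'C(m.-1, q))%:R / ('C(2 * m, 2 * q))%:R) hm0 (fun q hq => @t0 m q hq)) //.
have MQ : forall n, M n (fun y => y) = Mf n 0 1 0 0.
  by move=> n; apply: Mpoly' => x; ring.
rewrite !MQ /Mf !gS /= -[m.+2%:R]natr1 -[m.+1%:R]natr1.
have hg := ccg m; have gn := gneq0 m.
have hm : m%:R != 0 :> rat by rewrite pnatr_eq0 -lt0n.
have hx := nat_ge0 m.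
set G := g m in hg gn *; set C := cc m in hg *.
have EC : C = G^-1 by apply: (mulIf gn); rewrite hg mulVf.
rewrite EC; field; closer hm gn.
Qed.

Theorem propositionA1 (m : nat) (hm : (1 <= m)%N) :
  let c := (4 ^+ m * (m`!)%:R ^+ 2 / ((2 * m)`!)%:R : rat) in
  [/\ \sum_(1 <= q < m) (('C(m, q) * 'C(m.-1, q + 2))%:R / ('C(2 * m, 2 * q))%:R : rat)
        = 6^-1 * (m%:R) ^+ 2 - 13%:R / 6%:R * m%:R - 3%:R + 5%:R / 2%:R * c,
      \sum_(1 <= q < m) (('C(m, q) * 'C(m.-1, q + 1))%:R / ('C(2 * m, 2 * q))%:R : rat)
        = m%:R + 2%:R - 3%:R / 2%:R * c
    & \sum_(1 <= q < m) (('C(m, q) * 'C(m.-1, q))%:R / ('C(2 * m, 2 * q))%:R : rat)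
        = - 1 + 2^-1 * c].
Proof.
move=> c; split; [exact: part2 | exact: part1 | exact: part0].
Qed.
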